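(* Let $n\ge 2$ and let $P=(P_1,\dots,P_t)$ be a partition of $\{1,\dots,n+1\}$. Let $\Delta_i$ be a simplex of dimension $|P_i|$ for $i=1,\dots,t$, so that $\Delta_1\times\dots\times\Delta_t$ is an $(n+1)$-dimensional convex polytope. Then ${\cal K}(P)$ is isomorphic to the boundary complex of the polar (dual) polytope of $\Delta_1\times\dots\times\Delta_t$.
   Context: For a partition $P=(P_1,\dots,P_t)$ of $\{1,\dots,n+1\}$, ${\cal K}(P)$ is the simplicial complex on the vertex set $\{1,\dots,n+1\}\cup\{p_1,\dots,p_t\}$ ($t$ new vertices) whose $n$-faces are the sets $\{y_1,\dots,y_{n+1}\}$ with, for each $i$, $y_i=i$ or $y_i=p_j$ where $i\in P_j$, subject to the $y_i$ being pairwise distinct; its faces are all nonempty subsets of these. The boundary complex of a simplicial polytope is the abstract simplicial complex whose faces are the vertex sets of its proper faces; isomorphism means a vertex bijection mapping faces exactly onto faces. *)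

(* Defs.v *)
From mathcomp Require Import all_boot all_order all_algebra.
From mathcomp Require Import reals.
Set Implicit Arguments. Unset Strict Implicit. Unset Printing Implicit Defensive.
Import Order.TTheory GRing.Theory Num.Theory.
Local Open Scope ring_scope.

Definition dotp {R : numDomainType} {m : nat} (a x : 'I_m -> R) : R :=
  \sum_i a i * x i.

(* A partition (P_1,...,P_t) of {1,...,m} (here indexed by 'I_m) is given by
   the map p sending an element to the index of its block; blocks nonempty. *)
Definition block {m t : nat} (p : 'I_m -> 'I_t) (j : 'I_t) : {set 'I_m} :=
  [set i | p i == j].

Definition is_partition {m t : nat} (p : 'I_m -> 'I_t) : Prop :=
  forall j : 'I_t, exists i : 'I_m, p i = j.

(* vertex set: inl i  = element i of {1..m},  inr j = new vertex p_j *)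
Definition K_facet {m t : nat} (p : 'I_m -> 'I_t) (y : 'I_m -> 'I_m + 'I_t) : Prop :=
  (forall i, y i = inl i \/ y i = inr (p i)) /\ injective y.

Definition K_face {m t : nat} (p : 'I_m -> 'I_t) (s : {set 'I_m + 'I_t}) : Prop :=
  s != set0 /\
  exists y, K_facet p y /\ forall v, v \in s -> exists i, y i = v.

Definition aff_indep {R : numDomainType} {m k : nat} (A : {set 'I_m})
  (v : 'I_k -> 'I_m -> R) : Prop :=
  forall mu : 'I_k -> R, \sum_l mu l = 0 ->
    (forall i, i \in A -> \sum_l mu l * v l i = 0) -> forall l, mu l = 0.

(* Delta_j is the simplex in R^{P_j} (coordinates of block j) spanned by
   the #|P_j|+1 points V j; the product Delta_1 x ... x Delta_t lives in
   R^{P_1} x ... x R^{P_t} = R^m. *)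
Definition prod_simplices {R : numDomainType} {m t : nat} (p : 'I_m -> 'I_t)
  (V : forall j : 'I_t, 'I_(#|block p j|).+1 -> 'I_m -> R) (x : 'I_m -> R) : Prop :=
  forall j : 'I_t, exists lam : 'I_(#|block p j|).+1 -> R,
    (forall l, 0 <= lam l) /\ \sum_l lam l = 1 /\
    forall i, i \in block p j -> x i = \sum_l lam l * V j l i.

Definition in_interior {R : numDomainType} {m : nat} (S : ('I_m -> R) -> Prop)
  (c : 'I_m -> R) : Prop :=
  exists e : R, 0 < e /\ forall x, (forall i, `|x i - c i| < e) -> S x.

Definition polar {R : numDomainType} {m : nat} (S : ('I_m -> R) -> Prop)
  (c : 'I_m -> R) (y : 'I_m -> R) : Prop :=
  forall x, S x -> dotp y (fun i => x i - c i) <= 1.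

Definition face {R : numDomainType} {m : nat} (S F : ('I_m -> R) -> Prop) : Prop :=
  (exists x, F x) /\
  exists (a : 'I_m -> R) (b : R), (forall x, S x -> dotp a x <= b) /\
    forall x, F x <-> (S x /\ dotp a x = b).

Definition proper_face {R : numDomainType} {m : nat} (S F : ('I_m -> R) -> Prop) : Prop :=
  face S F /\ exists x, S x /\ ~ F x.

Definition is_vertex {R : numDomainType} {m : nat} (S : ('I_m -> R) -> Prop)
  (v : 'I_m -> R) : Prop :=
  face S (fun x => x = v).

Definition iso_boundary_complex {R : numDomainType} {m : nat} {T : finType}
  (K : {set T} -> Prop) (S : ('I_m -> R) -> Prop) : Prop :=
  exists f : T -> ('I_m -> R),
    injective f /\
    (forall v, is_vertex S v <-> exists u, f u = v) /\
    forall s : {set T}, K s <->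
      exists F, proper_face S F /\ forall u, u \in s <-> F (f u).

Arguments prod_simplices {R m t} p V x.
Arguments block {m t} p j.
Arguments K_face {m t} p s.

(* Main.v *)
Require Import Defs.
From mathcomp Require Import all_boot all_order all_algebra.
From mathcomp Require Import reals.
From mathcomp Require Import ring lra zify.
From Stdlib Require Import FunctionalExtensionality.
Unset Strict Implicit. Unset Printing Implicit Defensive.
Import Order.TTheory GRing.Theory Num.Theory.
Local Open Scope ring_scope.

Section S.
Variables (R : realType) (n t : nat) (p : 'I_n.+1 -> 'I_t)
  (V : forall j : 'I_t, 'I_(#|block p j|).+1 -> 'I_n.+1 -> R)
  (c : 'I_n.+1 -> R).
Hypothesis Hind : forall j, aff_indep (block p j) (V j).

Local Notation k j := #|block p j|.
Definition ev j : 'I_(k j) -> 'I_n.+1 := @enum_val _ (mem (block p j)).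

Lemma evP j r : p (ev j r) = j.
Proof. by have := enum_valP r; rewrite inE => /eqP. Qed.

Definition Amx j : 'M[R]_((k j).+1) :=
  \matrix_(l, r) (if unlift ord0 r is Some r' then V j l (ev j r') else 1).

Lemma Aunit j : Amx j \in unitmx.
Proof.
rewrite unitmxE unitfE; apply/negP => /det0P [v vn0 vA].
move/negP: vn0; apply; apply/eqP/matrixP => i l; rewrite ord1 mxE.
have H := Hind j (fun l => v 0 l).
apply: H => [|i' Hi'].
- move/matrixP: vA => /(_ 0 ord0); rewrite !mxE => H; rewrite -[X in _ = X]H.
  by apply: eq_bigr => l' _; rewrite mxE unlift_none mulr1.
- move/matrixP: vA => /(_ 0 (lift ord0 (enum_rank_in Hi' i'))).
  rewrite !mxE => H; rewrite -[X in _ = X]H; apply: eq_bigr => l' _; rewrite mxE liftK.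
  by rewrite /ev enum_rankK_in.
Qed.

Definition yv j (x : 'I_n.+1 -> R) : 'rV[R]_((k j).+1) :=
  \row_r (if unlift ord0 r is Some r' then x (ev j r') else 1).
Lemma AmxE j l r : Amx j l r = if unlift ord0 r is Some r' then V j l (ev j r') else 1.
Proof. by rewrite mxE. Qed.
Lemma yvE j x r : yv j x 0 r = if unlift ord0 r is Some r' then x (ev j r') else 1.
Proof. by rewrite mxE. Qed.
Definition Bm j := invmx (Amx j).
Definition bc j x (l : 'I_(k j).+1) := (yv j x *m Bm j) 0 l.

Lemma bcA j x : yv j x *m Bm j *m Amx j = yv j x.
Proof. exact: (mulmxKV (Aunit j)). Qed.

Lemma bc_sum1 j x : \sum_l bc j x l = 1.
Proof.
move/matrixP: (bcA j x) => /(_ 0 ord0); rewrite !mxE unlift_none => H.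
rewrite -[X in _ = X]H; apply: eq_bigr => l _; by rewrite AmxE unlift_none mulr1.
Qed.

Lemma bc_comb j x r : \sum_l bc j x l * V j l (ev j r) = x (ev j r).
Proof.
move/matrixP: (bcA j x) => /(_ 0 (lift ord0 r)); rewrite !mxE liftK => H.
rewrite -[X in _ = X]H; apply: eq_bigr => l _; by rewrite AmxE liftK.
Qed.

Lemma bc_comb_in j x i : i \in block p j -> \sum_l bc j x l * V j l i = x i.
Proof. move=> Hi; have := bc_comb j x (enum_rank_in Hi i); by rewrite /ev enum_rankK_in. Qed.

Lemma bcE j x l : bc j x l = Bm j ord0 l + \sum_r x (ev j r) * Bm j (lift ord0 r) l.
Proof.
rewrite /bc mxE big_ord_recl yvE unlift_none mul1r; congr (_ + _).
by apply: eq_bigr => r _; rewrite yvE liftK.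
Qed.

Lemma bc_lin j x y l : bc j x l - bc j y l =
  \sum_r (x (ev j r) - y (ev j r)) * Bm j (lift ord0 r) l.
Proof.
rewrite !bcE opprD addrACA subrr add0r -sumrN -big_split /=.
by apply: eq_bigr => r _; rewrite mulrBl.
Qed.

Lemma bc_ext j x y : (forall i, p i = j -> x i = y i) -> forall l, bc j x l = bc j y l.
Proof.
move=> H l; rewrite !bcE; congr (_ + _); apply: eq_bigr => r _.
by rewrite H // evP.
Qed.

Lemma bc_uniq j x (mu : 'I_(k j).+1 -> R) : \sum_l mu l = 1 ->
  (forall i, i \in block p j -> \sum_l mu l * V j l i = x i) ->
  forall l, mu l = bc j x l.
Proof.
move=> H1 H2 l; apply/eqP; rewrite -subr_eq0; apply/eqP; move: l.
apply: (Hind j (fun l => mu l - bc j x l)).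
  by rewrite sumrB H1 bc_sum1 subrr.
move=> i Hi; under eq_bigr do rewrite mulrBl.
by rewrite sumrB H2 // bc_comb_in // subrr.
Qed.

Lemma bc_vert j l' l : bc j (V j l') l = (l == l')%:R.
Proof.
symmetry; apply: (@bc_uniq j (V j l') (fun l => (l == l')%:R)) => [|i Hi].
  by rewrite (bigD1 l') //= eqxx big1 ?addr0 // => l0 /negbTE ->.
rewrite (bigD1 l') //= eqxx mul1r big1 ?addr0 // => l0 /negbTE ->; by rewrite mul0r.
Qed.

Definition T := ('I_n.+1 + 'I_t)%type.
Definition ju (u : T) : 'I_t := match u with inl i => p i | inr j => j end.
Definition lu (u : T) : nat :=
  match u with inl i => (index i (enum (block p (p i)))).+1 | inr _ => 0%N end.
Definition BC (u : T) x := bc (ju u) x (inord (lu u)).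
Definition U j (l : 'I_(k j).+1) : T :=
  if (l : nat) == 0%N then inr j else inl (nth ord0 (enum (block p j)) l.-1).

Lemma lu_lt u : (lu u < (k (ju u)).+1)%N.
Proof.
case: u => [i|j] //=; rewrite ltnS cardE index_mem mem_enum inE //.
Qed.

Lemma U_BC j l x : BC (U j l) x = bc j x l.
Proof.
rewrite /U; case: eqP => [l0|ln0].
  by rewrite /BC /=; congr bc; apply: val_inj; rewrite /= inordK // l0.
have Hl : (l.-1 < size (enum (block p j)))%N.
  by rewrite -cardE; case: l ln0 => [[|l']] //= Hl _.
have Hi : p (nth ord0 (enum (block p j)) l.-1) = j.
  by have := mem_nth ord0 Hl; rewrite mem_enum inE => /eqP.
rewrite /BC /=; rewrite Hi index_uniq ?enum_uniq //.
have E : (l.-1).+1 = l :> nat by rewrite prednK // lt0n; apply/eqP.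
by congr bc; apply: val_inj; rewrite /= E inordK.
Qed.

Lemma U_inv u : U (ju u) (inord (lu u)) = u.
Proof.
have := lu_lt u; case: u => [i|j] /= H; rewrite /U inordK //=.
by rewrite nth_index // mem_enum inE.
Qed.

Lemma ju_U j l : ju (U j l) = j.
Proof.
rewrite /U; case: eqP => //= ln0.
have Hl : (l.-1 < size (enum (block p j)))%N.
  by rewrite -cardE; case: l ln0 => [[|l']] //= Hl _.
by have := mem_nth ord0 Hl; rewrite mem_enum inE => /eqP.
Qed.

Lemma U_inj j : injective (U j).
Proof.
move=> l1 l2; rewrite /U.
have Hs : forall l : 'I_(k j).+1, (l : nat) != 0%N -> (l.-1 < size (enum (block p j)))%N.
  by move=> l ln0; rewrite -cardE; case: l ln0 => [[|l']] //= Hl _.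
case: eqP => l10; case: eqP => l20 //.
  by move=> _; apply: val_inj; move: l10 l20 => /= -> ->.
move=> [] /eqP; rewrite nth_uniq ?enum_uniq ?Hs //; try exact/eqP.
move=> /eqP E; apply: val_inj; rewrite /=.
have -> : (l1 : nat) = l1.-1.+1 by rewrite prednK // lt0n; apply/eqP.
have -> : (l2 : nat) = l2.-1.+1 by rewrite prednK // lt0n; apply/eqP.
by rewrite E.
Qed.

Lemma bc_dir j x z s l :
  bc j (fun i => x i + s * (z i - x i)) l = bc j x l + s * (bc j z l - bc j x l).
Proof.
apply/eqP; rewrite -subr_eq0 opprD addrA; apply/eqP.
rewrite [bc j _ l - _]bc_lin bc_lin mulr_sumr -sumrB big1 // => r _.
by rewrite addrAC subrr add0r mulrA subrr.
Qed.

Definition Q := prod_simplices p V.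

Lemma Qchar x : Q x <-> forall u, 0 <= BC u x.
Proof.
split.
  move=> HQ u; have [lam [H0 [H1 H2]]] := HQ (ju u).
  by rewrite /BC -(@bc_uniq _ x lam H1 (fun i Hi => esym (H2 i Hi))).
move=> H j; exists (bc j x); split; last split.
- by move=> l; rewrite -U_BC.
- exact: bc_sum1.
- by move=> i Hi; rewrite bc_comb_in.
Qed.

Lemma bc_le1 j x l : (forall l, 0 <= bc j x l) -> bc j x l <= 1.
Proof.
move=> H; rewrite -(bc_sum1 j x) (bigD1 l) //= lerDl.
by apply: sumr_ge0 => l' _.
Qed.

Lemma BC_le1 u x : Q x -> BC u x <= 1.
Proof.
move=> /Qchar H; apply: bc_le1 => l; by rewrite -U_BC.
Qed.

Hypothesis Hint : in_interior Q c.

Lemma cQ : Q c.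
Proof. have [e [e0 H]] := Hint; apply: H => i; by rewrite subrr normr0. Qed.

Lemma BCc_gt0 u : 0 < BC u c.
Proof.
have := (Qchar c).1 cQ u; rewrite le_eqVlt => /orP [/eqP E|//]; exfalso.
have [e [e0 He]] := Hint.
set j := ju u; set l := inord (lu u) : 'I_(k j).+1.
set S := \sum_i `|V j l i - c i|.
have S0 : 0 <= S by apply: sumr_ge0 => i _.
set s := e / (1 + S).
have s0 : 0 < s by rewrite divr_gt0 // ltr_pwDl.
have Hz : Q (fun i => c i + (- s) * (V j l i - c i)).
  apply: He => i; rewrite addrAC subrr add0r normrM normrN (gtr0_norm s0).
  have Hi : `|V j l i - c i| <= S.
    by rewrite /S (bigD1 i) //= lerDl; apply: sumr_ge0 => i' _.
  have Hse : s * (1 + S) = e by rewrite /s divfK // gt_eqF // ltr_pwDl.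
  move: Hse; rewrite mulrDr mulr1 => Hse.
  have : s * `|V j l i - c i| <= s * S by rewrite ler_wpM2l // ltW.
  lra.
have := (Qchar _).1 Hz u; rewrite /BC -/j -/l bc_dir bc_vert eqxx.
move: E; rewrite /BC -/j -/l => <-; rewrite mulr1n; lra.
Qed.

Lemma sum_fiber j (F : 'I_(k j) -> 'I_n.+1 -> R) :
  \sum_i \sum_(r | ev j r == i) F r i = \sum_r F r (ev j r).
Proof.
under eq_bigr do rewrite big_mkcond.
rewrite exchange_big; apply: eq_bigr => r _; rewrite -big_mkcond /=.
by rewrite (big_pred1 (ev j r)) // => i; rewrite /= eq_sym.
Qed.

Definition wj j (l : 'I_(k j).+1) : 'I_n.+1 -> R :=
  fun i => - (\sum_(r | ev j r == i) Bm j (lift ord0 r) l) / bc j c l.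
Definition w u := wj (ju u) (inord (lu u)).

Lemma dotwj j l x : bc j c l != 0 ->
  dotp (wj j l) (fun i => x i - c i) = 1 - bc j x l / bc j c l.
Proof.
move=> Hb; rewrite /dotp /wj.
have -> : \sum_i (- (\sum_(r | ev j r == i) Bm j (lift ord0 r) l) / bc j c l) * (x i - c i)
   = - (\sum_i \sum_(r | ev j r == i) Bm j (lift ord0 r) l * (x i - c i)) / bc j c l.
  rewrite -sumrN mulr_suml; apply: eq_bigr => i _.
  by rewrite mulrAC mulNr mulr_suml.
rewrite sum_fiber.
have -> : \sum_r Bm j (lift ord0 r) l * (x (ev j r) - c (ev j r)) = bc j x l - bc j c l.
  by rewrite bc_lin; apply: eq_bigr => r _; rewrite mulrC.
by field.
Qed.

Lemma dotw u x : dotp (w u) (fun i => x i - c i) = 1 - BC u x / BC u c.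
Proof. by rewrite /w dotwj // gt_eqF // BCc_gt0. Qed.

Definition Qp := polar Q c.

Lemma dotpC (a b : 'I_n.+1 -> R) : dotp a b = dotp b a.
Proof. by apply: eq_bigr => i _; rewrite mulrC. Qed.

Lemma Qp_w u : Qp (w u).
Proof.
move=> x Hx; rewrite dotw lerBlDr lerDl.
by rewrite divr_ge0 ?(Qchar x).1 // ltW // BCc_gt0.
Qed.

Lemma Qp0 : Qp (fun _ => 0).
Proof. move=> x _; rewrite /dotp big1 // => i _; by rewrite mul0r. Qed.

Lemma Q_of_w x : (forall u, dotp (w u) (fun i => x i - c i) <= 1) -> Q x.
Proof.
move=> H; apply/Qchar => u; have := H u; rewrite dotw lerBlDr lerDl.
by rewrite pmulr_lge0 // invr_gt0 BCc_gt0.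
Qed.

Lemma dotp_pt (i : 'I_n.+1) (e : R) (z : 'I_n.+1 -> R) : dotp (fun i' => if i' == i then e else 0) z = e * z i.
Proof.
rewrite /dotp (bigD1 i) //= eqxx big1 ?addr0 // => i' /negbTE ->; by rewrite mul0r.
Qed.

Definition M i := `|c i| + \sum_l `|V (p i) l i|.

Lemma Q_bound x i : Q x -> `|x i - c i| <= M i.
Proof.
move=> Hx; have Hi : i \in block p (p i) by rewrite inE.
rewrite -(@bc_comb_in _ x _ Hi) /M [`|c i| + _]addrC.
apply: (le_trans (ler_normB _ _)); rewrite lerD2r.
apply: (le_trans (ler_norm_sum _ _ _)); apply: ler_sum => l _.
have H0 : 0 <= bc (p i) x l by rewrite -U_BC; exact: (Qchar x).1.
have H1 : bc (p i) x l <= 1 by rewrite -U_BC; exact: BC_le1.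
rewrite normrM ger0_norm //; apply: ler_piMl => //.
Qed.

Lemma Qp_coord i : exists e, 0 < e /\ Qp (fun i' => if i' == i then e else 0)
   /\ Qp (fun i' => if i' == i then - e else 0).
Proof.
have M0 : 0 <= M i by rewrite /M addr_ge0 // sumr_ge0.
exists (1 / (1 + M i)); split; first by rewrite divr_gt0 // ltr_pwDl.
have Hs : forall x, Q x -> 1 / (1 + M i) * `|x i - c i| <= 1.
  move=> x Hx; rewrite mul1r ler_pdivrMl ?ltr_pwDl // mulr1.
  by apply: (le_trans (@Q_bound x i Hx)); rewrite lerDr.
have e0 : 0 <= 1 / (1 + M i) by rewrite divr_ge0 // addr_ge0.
split => x Hx; rewrite dotp_pt; apply: (le_trans _ (Hs x Hx)).
  by rewrite ler_wpM2l // ler_norm.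
by rewrite mulNr -mulrN ler_wpM2l // -normrN ler_norm.
Qed.

Lemma face_char F : proper_face Qp F ->
  exists x, Q x /\ forall y, F y <-> Qp y /\ dotp y (fun i => x i - c i) = 1.
Proof.
move=> [[[y1 Fy1] [a [b [Hab HF]]]] [y0 [Qy0 nFy0]]].
have b0 : 0 <= b.
  have := Hab _ Qp0; rewrite /dotp big1 // => i _; by rewrite mulr0.
have bn0 : b != 0.
  apply/negP => /eqP b0'; apply: nFy0; apply/HF; split => //.
  have a0 : forall i, a i = 0.
    move=> i; have [e [e0 [H1 H2]]] := Qp_coord i.
    have := Hab _ H1; have := Hab _ H2; rewrite !(dotpC a) !dotp_pt b0'.
    rewrite mulNr oppr_le0 => h1 h2; apply/eqP; rewrite eq_le.
    by rewrite -(pmulr_rle0 _ e0) h2 -(pmulr_rge0 _ e0) h1.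
  by rewrite b0' /dotp big1 // => i _; rewrite a0 mul0r.
have Hd : forall y, dotp y (fun i => (c i + a i / b) - c i) = dotp a y / b.
  move=> y; rewrite /dotp mulr_suml; apply: eq_bigr => i _.
  by rewrite addrAC subrr add0r mulrA [y i * _]mulrC.
exists (fun i => c i + a i / b); split.
  apply: Q_of_w => u; rewrite Hd ler_pdivrMr ?mul1r.
    exact: Hab (Qp_w u).
  by rewrite lt_def bn0.
move=> y; rewrite HF Hd; split => [[Hy Hy2]|[Hy Hy2]]; split => //.
  by rewrite Hy2 divff.
by move: Hy2 => /(congr1 (fun z => z * b)); rewrite divfK // mul1r.
Qed.

Section Xs.
Variable s : {set T}.
Hypothesis Hs : forall j, exists l, U j l \notin s.

Definition Nb j := #|[pred l : 'I_(k j).+1 | U j l \notin s]|.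
Definition lam j (l : 'I_(k j).+1) : R := if U j l \in s then 0 else (Nb j)%:R^-1.
Definition xs i := \sum_l lam (p i) l * V (p i) l i.

Lemma Nb_gt0 j : (0 < Nb j)%N.
Proof. have [l Hl] := Hs j; apply/card_gt0P; by exists l. Qed.

Lemma Nb_le j : (Nb j <= n.+2)%N.
Proof.
apply: (leq_trans (max_card _)); rewrite card_ord ltnS.
by have := max_card (mem (block p j)); rewrite card_ord.
Qed.

Lemma xs_bc j l : bc j xs l = lam j l.
Proof.
symmetry; move: l; apply: (@bc_uniq j xs (lam j)).
  transitivity (\sum_(l in [pred l : 'I_(k j).+1 | U j l \notin s]) (Nb j)%:R^-1 : R).
    rewrite [RHS]big_mkcond; apply: eq_bigr => l _; rewrite /lam inE; by case: (U j l \in s).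
  rewrite sumr_const -/(Nb j) -[_ *+ Nb j]mulr_natr mulVf // pnatr_eq0 -lt0n; exact: Nb_gt0.
move=> i Hi; rewrite /xs; move: (Hi); rewrite inE => /eqP Hpi.
by rewrite Hpi.
Qed.
Lemma BC_xs u : BC u xs = if u \in s then 0 else (Nb (ju u))%:R^-1.
Proof. by rewrite /BC xs_bc /lam U_inv. Qed.

Lemma xs_Q : Q xs.
Proof. apply/Qchar => u; rewrite BC_xs; case: ifP => // _; by rewrite invr_ge0. Qed.

Lemma BC_xs0 u : BC u xs = 0 <-> u \in s.
Proof.
rewrite BC_xs; case: ifP => // _; split => // /eqP; rewrite invr_eq0 pnatr_eq0.
by rewrite -(negbTE (lt0n_neq0 (Nb_gt0 (ju u)))).

Qed.

Lemma BC_xs_lb u : u \notin s -> (n.+2)%:R^-1 <= BC u xs.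
Proof.
move=> Hu; rewrite BC_xs (negbTE Hu) lef_pV2 ?inE ?ltr0n ?Nb_gt0 //.
rewrite ler_nat Nb_le //.
all: by rewrite posrE ltr0n ?Nb_gt0.
Qed.
End Xs.

Lemma w_face u x : dotp (w u) (fun i => x i - c i) = 1 <-> BC u x = 0.
Proof.
have b0 := BCc_gt0 u; rewrite dotw; split => [H|->]; last by rewrite mul0r subr0.
have : BC u x / BC u c = 0 by lra.
by move/eqP; rewrite mulf_eq0 invr_eq0 (gt_eqF b0) orbF => /eqP.
Qed.

Lemma fin_min (X : finType) (g : X -> R) : (forall u, 0 < g u) ->
  exists d, 0 < d /\ forall u, d <= g u.
Proof.
move=> H.
suff: forall s : seq X, exists d, 0 < d /\ forall u, u \in s -> d <= g u.
  move/(_ (enum X)) => [d [d0 Hd]]; exists d; split => // u; apply: Hd; by rewrite mem_enum.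
elim => [|a s [d [d0 Hd]]]; first by exists 1.
exists (Num.min d (g a)); split; first by rewrite lt_min d0 H.
move=> u; rewrite inE => /orP [/eqP ->|Hu]; rewrite ge_min ?lexx ?orbT //.
by rewrite Hd.
Qed.

Lemma zero_exists x y : Q x -> Qp y -> dotp y (fun i => x i - c i) = 1 ->
  exists u, BC u x = 0.
Proof.
move=> Hx Hy H1; case: (pickP (fun u => BC u x == 0)) => [u /eqP Hu|H0].
  by exists u.
exfalso.
have Hpos : forall u, 0 < BC u x.
  move=> u; rewrite lt_def (Qchar x).1 // andbT; by have := H0 u => /= ->.
have [d [d0 Hd]] := @fin_min _ _ Hpos.
set x' := fun i => x i + (- d) * (c i - x i).
have Hx' : Q x'.
  apply/Qchar => u; rewrite /BC bc_dir -/(BC u x) -/(BC u c).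
  have := Hd u; have := BC_le1 u c cQ; have := (Qchar c).1 cQ u; nra.
have := Hy x' Hx'.
have -> : dotp y (fun i => x' i - c i) = (1 + d) * dotp y (fun i => x i - c i).
  rewrite /dotp mulr_sumr; apply: eq_bigr => i _; rewrite /x'; ring.
rewrite H1; lra.
Qed.

Hypothesis Hpart : is_partition p.

Lemma k_pos j : (0 < k j)%N.
Proof. have [i Hi] := Hpart j; apply/card_gt0P; exists i; by rewrite inE Hi. Qed.

Lemma two_vertices j u : exists l, U j l != u.
Proof.
case: (boolP (U j ord0 == u)) => [/eqP H0|]; last by exists ord0.
exists ord_max; apply/negP => /eqP H1.
have := @U_inj j _ _ (etrans H0 (esym H1)) => /(congr1 val) /= E.
by have := k_pos j; rewrite -E.
Qed.

Lemma w_inj : injective w.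
Proof.
move=> u1 u2 E; apply/eqP/negPn/negP => Hne.
have Hs : forall j, exists l, U j l \notin [set u1].
  move=> j; have [l Hl] := two_vertices j u1; exists l; by rewrite inE.
have H1 : BC u1 (xs [set u1]) = 0 by apply/(@BC_xs0 [set u1] Hs u1); rewrite inE.
have H2 : BC u2 (xs [set u1]) != 0.
  apply/negP => /eqP /(@BC_xs0 [set u1] Hs u2); rewrite inE eq_sym; exact/negP.
move/w_face: H1; rewrite E => /w_face; exact/eqP.
Qed.

Lemma sum_block j (F : 'I_n.+1 -> R) : \sum_(i | p i == j) F i = \sum_r F (ev j r).
Proof.
transitivity (\sum_(i in block p j) F i); first by apply: eq_bigl => i; rewrite inE.
exact: big_enum_val.
Qed.

Lemma Qchar2 x : (forall j l, 0 <= bc j x l) -> Q x.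
Proof. move=> H; apply/Qchar => u; exact: H. Qed.

Lemma ev_rank i : exists r, ev (p i) r = i.
Proof.
have Hi : i \in block p (p i) by rewrite inE.
by exists (enum_rank_in Hi i); rewrite /ev enum_rankK_in.
Qed.

Section Uniq.
Variable u : T.
Lemma Hs1 : forall j, exists l, U j l \notin [set u].
Proof. move=> j; have [l Hl] := two_vertices j u; exists l; by rewrite inE. Qed.
Let x := xs [set u].

Definition Dd (d : 'I_n.+1 -> R) j (l : 'I_(k j).+1) :=
  \sum_r d (ev j r) * (V j l (ev j r) - x (ev j r)).

Lemma span_id d j z : \sum_r d (ev j r) * (z (ev j r) - x (ev j r)) =
  \sum_l bc j z l * Dd d j l.
Proof.
rewrite /Dd; under [RHS]eq_bigr do rewrite mulr_sumr.
rewrite exchange_big; apply: eq_bigr => r _.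
have -> : \sum_l bc j z l * (d (ev j r) * (V j l (ev j r) - x (ev j r))) =
  d (ev j r) * (\sum_l bc j z l * V j l (ev j r) - (\sum_l bc j z l) * x (ev j r)).
  rewrite mulr_suml -sumrB mulr_sumr; apply: eq_bigr => l _; ring.
by rewrite bc_comb bc_sum1 mul1r.
Qed.

Lemma block_zero d j : (forall l, Dd d j l = 0) -> forall r, d (ev j r) = 0.
Proof.
move=> H r0; have := span_id d j (fun i => x i + (i == ev j r0)%:R).
rewrite [X in _ = X -> _]big1 => [|l _]; last by rewrite H mulr0.
rewrite (bigD1 r0) //= addrAC subrr add0r eqxx mulr1 big1 ?addr0 // => r Hr.
by rewrite addrAC subrr add0r (inj_eq enum_val_inj) (negbTE Hr) mulr0.
Qed.

Lemma xQ : Q x.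
Proof. exact: (@xs_Q [set u] Hs1). Qed.

Lemma x0 u' : BC u' x = 0 <-> u' = u.
Proof. rewrite (@BC_xs0 [set u] Hs1 u') inE; split; by move/eqP. Qed.

Lemma perturb y j l : Qp y -> dotp y (fun i => x i - c i) = 1 -> U j l != u -> Dd y j l = 0.
Proof.
move=> Hy H1 Hl.
set sig := (n.+2)%:R^-1 : R.
have sig0 : 0 < sig by rewrite invr_gt0 ltr0n.
have sig1 : sig <= 1 by rewrite invf_le1 ?ler1n // ltr0n.
have key : forall sg, (sg = sig \/ sg = - sig) -> sg * Dd y j l <= 0.
  move=> sg Hsg.
  set x' := fun i => if p i == j then x i + sg * (V j l i - x i) else x i.
  have Hx' : Q x'.
    apply: Qchar2 => j2; case: (eqVneq j2 j) => [->|ne] l2.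
      rewrite (@bc_ext j x' (fun i => x i + sg * (V j l i - x i))); last first.
        by move=> i Hi; rewrite /x' Hi eqxx.
      rewrite bc_dir bc_vert -!U_BC.
      case: (eqVneq (U j l2) u) => [E|NE].
        have -> : (l2 == l) = false.
          apply/negP => /eqP E2; move: Hl; by rewrite -E2 E eqxx.
        by rewrite (x0 _).2 // subrr mulr0 addr0.
      have lb := @BC_xs_lb [set u] Hs1 (U j l2).
      have ub := BC_le1 (U j l2) x xQ.
      have {}lb : sig <= BC (U j l2) x by apply: lb; rewrite inE.
      case: (l2 == l); rewrite /= ?mulr1n ?mulr0n; case: Hsg => ->; nra.
    rewrite (@bc_ext j2 x' x); last first.
      by move=> i Hi; rewrite /x' Hi (negbTE ne).
    by rewrite -U_BC; apply: (Qchar x).1; exact: xQ.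
  have := Hy x' Hx'.
  have -> : dotp y (fun i => x' i - c i) = dotp y (fun i => x i - c i) + sg * Dd y j l.
    rewrite /dotp /Dd mulr_sumr -(sum_block j (fun i => sg * (y i * (V j l i - x i)))) [X in _ + X]big_mkcond -big_split /=.
    apply: eq_bigr => i _; rewrite /x'; case: (p i == j) => /=; ring.
  rewrite H1; lra.
have := key sig (or_introl erefl); have := key (- sig) (or_intror erefl).
nra.
Qed.

Lemma uniq_vertex y : Qp y -> dotp y (fun i => x i - c i) = 1 -> forall i, y i = w u i.
Proof.
move=> Hy H1.
have Hw1 : dotp (w u) (fun i => x i - c i) = 1 by apply/w_face/x0.
set d := fun i => y i - w u i.
have HD : forall j l, U j l != u -> Dd d j l = 0.
  move=> j l Hl; have := @perturb y j l Hy H1 Hl; have := @perturb (w u) j l (Qp_w u) Hw1 Hl.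
  rewrite /Dd /d => E1 E2; rewrite -[X in _ = X](subrr 0).
  rewrite -[X in _ = X - _]E2 -[X in _ = _ - X]E1 -sumrB.
  by apply: eq_bigr => r _; ring.
have Hout : forall j, j != ju u -> forall r, d (ev j r) = 0.
  move=> j Hj; apply: block_zero => l; apply: HD; apply/eqP => E.
  by move: Hj; rewrite -E ju_U eqxx.
have dout : forall i, p i != ju u -> d i = 0.
  move=> i Hi; have [r <-] := ev_rank i; exact: Hout.
set j0 := ju u; set l0 : 'I_(k j0).+1 := inord (lu u).
have Hl0 : U j0 l0 = u by exact: U_inv.
have Hdot : dotp d (fun i => x i - c i) = 0.
  rewrite /dotp /d -[X in _ = X](subrr 1) -[X in _ = X - _]H1 -[X in _ = _ - X]Hw1 /dotp -sumrB.
  by apply: eq_bigr => i _; ring.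
have Hsum : \sum_r d (ev j0 r) * (c (ev j0 r) - x (ev j0 r)) = 0.
  have -> : \sum_r d (ev j0 r) * (c (ev j0 r) - x (ev j0 r)) =
      - \sum_(i | p i == j0) d i * (x i - c i).
    rewrite sum_block -sumrN; apply: eq_bigr => r _; ring.
  rewrite -[X in _ = X]oppr0 -[X in _ = - X]Hdot; congr (- _).
  rewrite /dotp [in RHS](bigID (fun i => p i == j0)) /= [X in _ = _ + X]big1 ?addr0 //.
  by move=> i Hi; rewrite dout // mul0r.
have Hl0z : Dd d j0 l0 = 0.
  have := span_id d j0 c; rewrite Hsum (bigD1 l0) //= big1 ?addr0 => [|l Hl]; last first.
    rewrite HD ?mulr0 //; apply/eqP => E; move/negP: Hl; apply.
    by apply/eqP; apply: (@U_inj j0); rewrite E Hl0.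
  move/esym/eqP; rewrite mulf_eq0 => /orP [|/eqP //].
  have := BCc_gt0 u; rewrite /BC -/j0 -/l0 => /gt_eqF ->; done.
have Hall : forall l, Dd d j0 l = 0.
  move=> l; case: (eqVneq l l0) => [->|Hl] //; apply: HD; apply/eqP => E.
  by move/eqP: Hl; apply; apply: (@U_inj j0); rewrite E Hl0.
have Hblk : forall j, j = j0 -> forall r, d (ev j r) = 0.
  by move=> j ->; apply: block_zero.
move=> i; apply/eqP; rewrite -subr_eq0; apply/eqP.
have [r Er] := ev_rank i; rewrite -[i]Er.
case: (eqVneq (p i) j0) => [E|NE]; [exact: Hblk | exact: Hout].
Qed.
End Uniq.

Lemma w_nz u : exists i, w u i != 0.
Proof.
case: (pickP (fun i => w u i != 0)) => [i Hi|H]; first by exists i.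
exfalso; have := (w_face u (xs [set u])).2 ((x0 u _).2 erefl).
rewrite /dotp big1 => [|i _]; last by have := H i => /= /negbFE /eqP ->; rewrite mul0r.
move/eqP; rewrite eq_sym oner_eq0 //.
Qed.

Lemma vertex_iff v : is_vertex Qp v <-> exists u, w u = v.
Proof.
split.
  move=> Hv.
  have Hp : proper_face Qp (fun x => x = v).
    split => //.
    have [i0 Hi0] := w_nz (inl ord0).
    case: (eqVneq (v i0) 0) => [E|NE].
      exists (w (inl ord0)); split; first exact: Qp_w.
      by move=> E2; move: Hi0; rewrite E2 E eqxx.
    exists (fun _ => 0); split; first exact: Qp0.
    by move=> E2; move: NE; rewrite -E2 eqxx.
  have [x [Hx HF]] := @face_char _ Hp.
  have [Hv1 Hv2] := (HF v).1 erefl.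
  have [u Hu] := @zero_exists x v Hx Hv1 Hv2.
  by exists u; apply/HF; split; [exact: Qp_w | exact/w_face].
move=> [u <-]; split; first by exists (w u).
exists (fun i => xs [set u] i - c i), 1; split.
  by move=> y Hy; rewrite dotpC; apply: Hy; exact: xQ.
move=> y; split => [->|[Hy H1]].
  by split; [exact: Qp_w | rewrite dotpC; exact/w_face/x0].
apply: functional_extensionality; apply: (@uniq_vertex u y) => //; by rewrite dotpC.
Qed.

Lemma face_iff (s : {set T}) : K_face p s <-> exists F, proper_face Qp F /\ forall u, u \in s <-> F (w u).
Proof.
split.
  move=> [sn0 [y [[Hy1 Hyinj] Hys]]].
  have Hs : forall j, exists l, U j l \notin s.
    move=> j; case: (pickP (fun l => U j l \notin s)) => [l Hl|H]; first by exists l.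
    exfalso.
    have := H ord0; rewrite /U /= => /negbFE /Hys [i0 Hi0].
    have Ep : p i0 = j by case: (Hy1 i0); rewrite Hi0 => // [[]].
    subst j.
    have := H (inord (lu (inl i0))); rewrite (U_inv (inl i0)) => /negbFE /Hys [i1 Hi1].
    case: (Hy1 i1); rewrite Hi1 => // [[E]]; subst i1.
    by rewrite Hi0 in Hi1.
  set x := xs s.
  exists (fun z => Qp z /\ dotp z (fun i => x i - c i) = 1); split.
    split.
      split.
        have [u Hu] := set0Pn _ sn0.
        exists (w u); split; first exact: Qp_w.
        by apply/w_face/(@BC_xs0 s Hs u).
      exists (fun i => x i - c i), 1; split.
        by move=> z Hz; rewrite dotpC; apply: Hz; exact: (@xs_Q s Hs).
      by move=> z; rewrite dotpC.
    exists (fun _ => 0); split; first exact: Qp0.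
    move=> [_]; rewrite /dotp big1 => [|i _]; last by rewrite mul0r.
    by move/eqP; rewrite eq_sym oner_eq0.
  move=> u; rewrite -(@BC_xs0 s Hs u); split.
    by move=> H; split; [exact: Qp_w | exact/w_face].
  by move=> [_ /w_face].
move=> [F [HF Hs]].
have [x [Hx HFx]] := @face_char F HF.
have HsBC : forall u, u \in s <-> BC u x = 0.
  move=> u; rewrite Hs HFx; split; first by move=> [_ /w_face].
  by move=> H; split; [exact: Qp_w | exact/w_face].
split.
  have [y1 Fy1] := HF.1.1; have [Hy1 Hy2] := (HFx y1).1 Fy1.
  have [u Hu] := @zero_exists x y1 Hx Hy1 Hy2.
  by apply/set0Pn; exists u; apply/HsBC.
pose g j := odflt ord0 [pick l | bc j x l != 0].
have Hg : forall j, bc j x (g j) != 0.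
  move=> j; rewrite /g; case: pickP => [l Hl //|H] /=; exfalso.
  have := bc_sum1 j x; rewrite big1 => [|l _]; last by have := H l => /= /negbFE /eqP.
  by move/eqP; rewrite eq_sym oner_eq0.
pose uj j := U j (g j).
have Huj : forall j, BC (uj j) x != 0 by move=> j; rewrite U_BC.
exists (fun i => if uj (p i) == inl i then inr (p i) else inl i); split; first split.
- by move=> i; case: ifP; [right | left].
- move=> i1 i2; case: ifP => H1; case: ifP => H2 // [] E //.
  by have := eqP H1; rewrite E (eqP H2) => [[]].
move=> v /HsBC; case: v => [i|j] Hv.
  exists i; rewrite ifF //; apply/negP => /eqP E.
  by move: (Huj (p i)); rewrite E Hv eqxx.
have Hju := ju_U j (g j); rewrite -/(uj j) in Hju.
case Hu: (uj j) Hju => [i0|j'] /= Hp.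
  by exists i0; rewrite Hp Hu eqxx.
subst j'; by move: (Huj j); rewrite Hu Hv eqxx.
Qed.

Lemma main_iso : iso_boundary_complex (K_face p) Qp.
Proof. exists w; split; [exact: w_inj | split; [exact: vertex_iff | exact: face_iff]]. Qed.
End S.

Theorem theorem2p5 (R : realType) (n t : nat) (p : 'I_n.+1 -> 'I_t)
  (V : forall j : 'I_t, 'I_(#|block p j|).+1 -> 'I_n.+1 -> R)
  (c : 'I_n.+1 -> R) :
  (2 <= n)%N ->
  is_partition p ->
  (forall j, aff_indep (block p j) (V j)) ->
  in_interior (prod_simplices p V) c ->
  iso_boundary_complex (K_face p) (polar (prod_simplices p V) c).
Proof.
move=> _ Hpart Hind Hint.
exact: (@main_iso R n t p V c Hind Hint Hpart).
Qed.
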